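(* Let $k\ge 0$ be an integer and let $\mathcal{H}$ be a family of $n$ half-circles in the circle $\mathbb{S}^1$ with $n > 3k$. Then $\mathcal{H}$ contains at most $k+1$ different $k$-cliques.
   Context: A half-circle of $\mathbb{S}^1$ is an arc of $\mathbb{S}^1$ consisting of half of the circle (a semicircle). A subset $J$ of $k$ half-circles from $\mathcal{H}$ is a $k$-clique if there is a point $p\in\mathbb{S}^1$ that lies in all half-circles of $J$ but in no half-circle of $\mathcal{H}\setminus J$. *)

(* Defs.v *)
From HB Require Import structures.
From mathcomp Require Import all_boot all_order all_algebra.
From mathcomp Require Import reals.
Set Implicit Arguments. Unset Strict Implicit. Unset Printing Implicit Defensive.
Import Order.TTheory GRing.Theory Num.Theory.
Local Open Scope ring_scope.

Definition on_circle (R : realType) (p : R * R) : bool :=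
  p.1 ^+ 2 + p.2 ^+ 2 == 1.

(* The (closed) half-circle of S^1 with midpoint c (c on S^1):
   the points p of S^1 with <p, c> >= 0, i.e. the arc of angular
   length pi centered at c. *)
Definition in_half_circle (R : realType) (c p : R * R) : bool :=
  on_circle p && (0 <= c.1 * p.1 + c.2 * p.2).

Definition half_circle_family (R : realType) (n : nat) (H : 'I_n -> R * R) : Prop :=
  forall i, on_circle (H i).

Definition is_clique (R : realType) (n : nat) (H : 'I_n -> R * R)
    (k : nat) (J : {set 'I_n}) : Prop :=
  #|J| = k /\
  exists p : R * R, on_circle p /\
    forall i : 'I_n, in_half_circle (H i) p = (i \in J).

(* Main.v *)
Require Import Defs.
From HB Require Import structures.
From mathcomp Require Import all_boot all_order all_algebra.
From mathcomp Require Import reals.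
From mathcomp Require Import ring lra zify.
Set Implicit Arguments. Unset Strict Implicit. Unset Printing Implicit Defensive.
Import Order.TTheory GRing.Theory Num.Theory.

Lemma choose_pts (T : eqType) (U : Type) (u0 : U) (P : T -> U -> Prop) (s : seq T) :
  (forall x, x \in s -> exists y, P x y) -> exists f : T -> U, forall x, x \in s -> P x (f x).
Proof.
elim: s => [|a s IH] H; first by exists (fun _ => u0).
have [y Hy] := H a (mem_head _ _).
have [f Hf] : exists f : T -> U, forall x, x \in s -> P x (f x).
  by apply: IH => x hx; apply: H; rewrite inE hx orbT.
exists (fun x => if x == a then y else f x) => x.
by rewrite inE; case: eqP => [->|_] //= hx; exact: Hf.
Qed.

Local Open Scope ring_scope.

Definition dotp (R : realType) (c p : R * R) := c.1 * p.1 + c.2 * p.2.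
Definition detp (R : realType) (a b : R * R) := a.1 * b.2 - a.2 * b.1.

Lemma detN (R : realType) (a b : R * R) : detp b a = - detp a b.
Proof. rewrite /detp; ring. Qed.

Lemma detpp (R : realType) (a : R * R) : detp a a = 0.
Proof. rewrite /detp; ring. Qed.

Lemma det_trans (R : realType) (d a b c : R * R) :
  dotp d a < 0 -> dotp d b < 0 -> dotp d c < 0 ->
  0 < detp a b -> 0 < detp b c -> 0 < detp a c.
Proof.
move=> da db dc ab bc; rewrite ltNge; apply/negP => ac.
have e : detp b c * dotp d a + (- detp a c) * dotp d b + detp a b * dotp d c = 0.
  by rewrite /detp /dotp; ring.
have h1 : detp b c * dotp d a < 0 by rewrite pmulr_rlt0.
have h2 : (- detp a c) * dotp d b <= 0 by apply: mulr_ge0_le0; [rewrite oppr_ge0 | exact: ltW].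
have h3 : detp a b * dotp d c < 0 by rewrite pmulr_rlt0.
lra.
Qed.

Lemma det_neq0 (R : realType) (d p q : R * R) :
  on_circle p -> on_circle q -> dotp d p < 0 -> dotp d q < 0 -> detp p q = 0 -> q = p.
Proof.
rewrite /on_circle => /eqP hp /eqP hq dp dq e.
set t := dotp p q.
have e1 : q.1 = t * p.1.
  have : q.1 * (p.1 ^+ 2 + p.2 ^+ 2) = t * p.1 - p.2 * detp p q by rewrite /t /detp /dotp; ring.
  by rewrite hp e mulr1 mulr0 subr0.
have e2 : q.2 = t * p.2.
  have : q.2 * (p.1 ^+ 2 + p.2 ^+ 2) = t * p.2 + p.1 * detp p q by rewrite /t /detp /dotp; ring.
  by rewrite hp e mulr1 mulr0 addr0.
have ed : dotp d q = t * dotp d p by rewrite /dotp e1 e2; ring.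
have tpos : 0 < t.
  by move: dq; rewrite ed mulrC nmulr_rlt0.
have t2 : t ^+ 2 = 1.
  by rewrite -hq e1 e2 -[LHS]mulr1 -hp; ring.
have t1 : t = 1.
  have h0 : (t - 1) * (t + 1) = t ^+ 2 - 1 by ring.
  move: h0; rewrite t2 subrr.
  move/eqP; rewrite mulf_eq0 => /orP [/eqP h|/eqP h]; first lra.
  lra.
by rewrite [q]surjective_pairing e1 e2 t1 !mul1r -surjective_pairing.
Qed.

Lemma between (R : realType) (c p p' q : R * R) :
  0 < detp q p -> 0 < detp q p' -> 0 <= detp p p' ->
  (0 <= dotp c p' -> 0 <= dotp c q -> 0 <= dotp c p) /\
  (0 <= dotp c p -> 0 <= dotp c p' \/ 0 <= dotp c q).
Proof.
move=> h1 h2 h3.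
have e : detp q p' * dotp c p = detp p p' * dotp c q + detp q p * dotp c p'.
  by rewrite /detp /dotp; ring.
split.
  move=> a b; rewrite -(pmulr_rge0 _ h2) e.
  by apply: addr_ge0; apply: mulr_ge0 => //; exact: ltW.
move=> a; case: (lerP 0 (dotp c p')) => a1; first by left.
case: (lerP 0 (dotp c q)) => a2; first by right.
have : detp q p' * dotp c p < 0.
  rewrite e -[0]addr0; apply: ler_ltD.
    by apply: mulr_ge0_le0 => //; exact: ltW.
  by rewrite pmulr_rlt0.
by rewrite pmulr_rlt0 // ltNge a.
Qed.

Theorem lemma3 (R : realType) (k n : nat) (H : 'I_n -> R * R) :
  half_circle_family H -> (3 * k < n)%N ->
  forall s : seq {set 'I_n}, uniq s ->
    (forall J, J \in s -> is_clique H k J) ->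
    (size s <= k.+1)%N.
Proof.
move=> _ hn s us hs.
case Es: s => [|J0 s0]; first by [].
rewrite -Es.
have J0s : J0 \in s by rewrite Es mem_head.
have hs' : forall J, J \in s -> exists p : R * R,
    on_circle p /\ forall i, in_half_circle (H i) p = (i \in J).
  by move=> J hJ; case: (hs J hJ).
have [f hf] := @choose_pts _ (R * R)%type (0, 0) _ s hs'.
have memJ : forall J, J \in s -> forall i, (i \in J) = (0 <= dotp (H i) (f J)).
  by move=> J hJ i; have [oc hi] := hf J hJ; rewrite -hi /in_half_circle oc.
have cardJ : forall J, J \in s -> #|J| = k by move=> J /hs [].
have hU : forall A B : {set 'I_n}, (#|A :|: B| <= #|A| + #|B|)%N.
  by move=> A B; rewrite cardsU leq_subr.
have F1 : forall J1 J2 J3, J1 \in s -> J2 \in s -> J3 \in s -> exists i,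
    [/\ dotp (H i) (f J1) < 0, dotp (H i) (f J2) < 0 & dotp (H i) (f J3) < 0].
  move=> J1 J2 J3 h1 h2 h3.
  have : ~~ ([set: 'I_n] \subset J1 :|: J2 :|: J3).
    apply/negP => /subset_leq_card; rewrite cardsT card_ord => hle.
    have := hU (J1 :|: J2) J3; have := hU J1 J2.
    rewrite (cardJ _ h1) (cardJ _ h2) (cardJ _ h3); lia.
  case/subsetPn => i _; rewrite !inE !negb_or => /andP [/andP [a b] c].
  by exists i; rewrite !ltNge -!memJ.
have detne : forall J J', J \in s -> J' \in s -> J != J' -> detp (f J) (f J') != 0.
  move=> J J' hJ hJ' ne; apply/eqP => e.
  have [i [a b _]] := F1 J J' J hJ hJ' hJ.
  have eq := det_neq0 (hf J hJ).1 (hf J' hJ').1 a b e.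
  move/eqP: ne; apply; apply/setP => x; by rewrite !memJ // eq.
pose S := [set J | J \in s].
pose succ J := [set J' | (J' \in s) && (0 < detp (f J) (f J'))].
have J0S : J0 \in S by rewrite inE.
case: (@arg_maxnP _ J0 (fun J => J \in S) (fun J => #|succ J|) J0S) => q qS qmax.
have qs : q \in s by rewrite inE in qS.
have hq : forall J, J \in s -> J != q -> 0 < detp (f q) (f J).
  move=> J hJ ne; rewrite ltNge; apply/negP => le.
  have lt : 0 < detp (f J) (f q).
    rewrite detN oppr_gt0 lt_neqAle le andbT.
    by apply: detne => //; rewrite eq_sym.
  have sub : q |: succ q \subset succ J.
    apply/subsetP => x; rewrite !inE => /orP [/eqP ->|/andP [xs hx]].
      by rewrite qs lt.
    rewrite xs /=.
    have [i [a b c]] := F1 J q x hJ qs xs.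
    exact: det_trans a b c lt hx.
  have qn : q \notin succ q by rewrite inE detpp ltxx andbF.
  have := subset_leq_card sub; rewrite cardsU1 qn.
  have hJS : J \in S by rewrite inE.
  have := qmax J hJS; rewrite /=; lia.
have key : forall J J', J \in s -> J' \in s -> J != q -> J' != q ->
    0 <= detp (f J) (f J') -> (q :\: J \subset q :\: J') /\ (J \subset J' :|: q).
  move=> J J' hJ hJ' nJ nJ' hd; split.
    apply/subsetP => i; rewrite !inE => /andP [niJ iq]; rewrite iq andbT.
    apply/negP => iJ'; move/negP: niJ; apply.
    have [b1 _] := between (H i) (hq J hJ nJ) (hq J' hJ' nJ') hd.
    by rewrite memJ //; apply: b1; rewrite -memJ.
  apply/subsetP => i iJ; rewrite inE !memJ //; apply/orP.
  have [_ b2] := between (H i) (hq J hJ nJ) (hq J' hJ' nJ') hd.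
  by apply: b2; rewrite -memJ.
have injw : forall J J', J \in s -> J' \in s -> J != q -> J' != q ->
    0 <= detp (f J) (f J') -> #|q :\: J| = #|q :\: J'| -> J = J'.
  move=> J J' hJ hJ' nJ nJ' hd ce.
  have [s1 s2] := key J J' hJ hJ' nJ nJ' hd.
  have e1 : q :\: J = q :\: J' by apply/eqP; rewrite eqEcard s1 ce leqnn.
  have sub : J \subset J'.
    apply/subsetP => i iJ; move/subsetP: s2 => /(_ i iJ); rewrite inE => /orP [//|iq].
    have : i \notin q :\: J by rewrite inE iJ.
    by rewrite e1 inE iq andbT negbK.
  by apply/eqP; rewrite eqEcard sub (cardJ _ hJ) (cardJ _ hJ') leqnn.
have inj : forall J J', J \in s -> J' \in s -> J != q -> J' != q ->
    #|q :\: J| = #|q :\: J'| -> J = J'.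
  move=> J J' hJ hJ' nJ nJ' ce.
  case: (lerP 0 (detp (f J) (f J'))) => hd; first exact: injw.
  apply/esym; apply: injw => //; rewrite detN oppr_ge0; exact: ltW.
have pos : forall J, J \in s -> J != q -> (0 < #|q :\: J|)%N.
  move=> J hJ ne; rewrite card_gt0 setD_eq0; apply/negP => sub.
  have : q == J by rewrite eqEcard sub (cardJ _ hJ) (cardJ _ qs) leqnn.
  by rewrite eq_sym (negbTE ne).
have bound : forall J, J \in s -> (#|q :\: J| <= k)%N.
  by move=> J hJ; rewrite -(cardJ q qs); apply: subset_leq_card; apply: subsetDl.
have cS : #|S| = size s by rewrite cardsE; apply/card_uniqP.
rewrite -cS (cardsD1 q S) qS add1n ltnS.
pose g J : 'I_k.+1 := inord #|q :\: J|.
have <- : #|[set g J | J in S :\ q]| = #|S :\ q|.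
  apply: card_in_imset => J J'; rewrite !inE => /andP [nJ hJ] /andP [nJ' hJ'] e.
  apply: inj => //; move: e => /(congr1 (@nat_of_ord _)); rewrite /g !inordK // ltnS; exact: bound.
apply: leq_trans (_ : (#|[set~ (ord0 : 'I_k.+1)]| <= k)%N); last by rewrite cardsC1 card_ord.
apply: subset_leq_card; apply/subsetP => x /imsetP [J]; rewrite !inE => /andP [nJ hJ] ->.
apply/negP => /eqP /(congr1 (@nat_of_ord _)); rewrite /g inordK /=; last by rewrite ltnS; exact: bound.
by move=> e; have := pos J hJ nJ; rewrite e.
Qed.
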